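(* Let $B$ be a minimum-weight basis of the weighted uncertainty matroid $\mathcal{M}=(E,\mathcal{I},A,w)$. For $e\in E\setminus B$, let $C_e$ be the fundamental circuit of $e$ with respect to $B$, let $F_e=\{f\in C_e\setminus\{e\}: U_f>L_e\}$ and $\hat F_e=\{f\in C_e\setminus\{e\}: U_f>w_e\}$. A set $Q\subseteq E$ is a certificate of $B$ if and only if for every $e\in E\setminus B$ the following hold: 1. If $w_e\ge U_f$ for all $f\in C_e\setminus\{e\}$, and there exists $f'\in C_e\setminus\{e\}$ with $w_{f'}>L_e$, then $e\in Q$. 2. If $w_e\ge U_f$ for all $f\in C_e\setminus\{e\}$, and $w_f\le L_e$ for all $f\in C_e\setminus\{e\}$, then $e\in Q$ or $F_e\subseteq Q$. 3. If there exists $f\in C_e\setminus\{e\}$ with $w_e<U_f$, and there exists $f'\in C_e\setminus\{e\}$ (possibly $f'=f$) with $w_{f'}>L_e$, then $\hat F_e\cup\{e\}\subseteq Q$. 4. If there exists $f\in C_e\setminus\{e\}$ with $w_e<U_f$, and $w_{f'}\le L_e$ for all $f'\in C_e\setminus\{e\}$, then $F_e\subseteq Q$ or $\hat F_e\cup\{e\}\subseteq Q$.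
   Context: A weighted uncertainty matroid $\mathcal{M}=(E,\mathcal{I},A,w)$ consists of a matroid $M=(E,\mathcal{I})$ on a finite set $E$, for each $e\in E$ a non-empty finite union $A_e$ of bounded real intervals (each open or closed), and a weight $w_e\in A_e$. $L_e=\inf A_e$, $U_e=\sup A_e$. A minimum-weight basis is a basis of $M$ minimizing total weight. A weight assignment is $w^*$ with $w^*_e\in A_e$, consistent with $Q$ if $w^*_e=w_e$ on $Q$. $Q$ is a certificate of (verifies) a basis $B$ if for every weight assignment consistent with $Q$, $B$ is a minimum-weight basis with respect to it. For a basis $B$ and $e\notin B$, the fundamental circuit $C_e$ is the unique circuit contained in $B\cup\{e\}$. *)

(* Defs.v *)
From HB Require Import structures.
From mathcomp Require Import all_boot all_order all_algebra.
From mathcomp Require classical_sets.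
From mathcomp Require Import reals.
Set Implicit Arguments. Unset Strict Implicit. Unset Printing Implicit Defensive.
Import Order.TTheory GRing.Theory Num.Theory.
Local Open Scope ring_scope.

Definition is_matroid (T : finType) (indep : {set T} -> bool) : Prop :=
  [/\ indep set0,
      (forall X Y : {set T}, Y \subset X -> indep X -> indep Y) &
      (forall X Y : {set T}, indep X -> indep Y -> #|X| < #|Y| ->
         exists2 x, x \in Y :\: X & indep (x |: X))]%N.

Definition is_basis (T : finType) (indep : {set T} -> bool) (B : {set T}) : bool :=
  maxset indep B.

Definition is_circuit (T : finType) (indep : {set T} -> bool) (C : {set T}) : bool :=
  minset (fun X => ~~ indep X) C.

(* the fundamental circuit of e w.r.t. B: the (unique) circuit contained in B ∪ {e} *)
Definition fund_circuit (T : finType) (indep : {set T} -> bool) (B : {set T}) (e : T)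
  : {set T} :=
  odflt set0 [pick C | is_circuit indep C && (C \subset e |: B)].

Definition weight (R : numDomainType) (T : finType) (w : T -> R) (X : {set T}) : R :=
  \sum_(x in X) w x.

Definition min_weight_basis (R : numDomainType) (T : finType)
  (indep : {set T} -> bool) (w : T -> R) (B : {set T}) : Prop :=
  is_basis indep B /\
  forall B' : {set T}, is_basis indep B' -> weight w B <= weight w B'.

(* An interval [lo, hi] if closed = true, or (lo, hi) if closed = false. *)
Record bitv (R : realDomainType) := BItv { ilo : R; ihi : R; iclosed : bool }.

Definition in_bitv (R : realDomainType) (I : bitv R) (x : R) : bool :=
  if iclosed I then (ilo I <= x) && (x <= ihi I) else (ilo I < x) && (x < ihi I).

Definition in_area (R : realDomainType) (s : seq (bitv R)) (x : R) : bool :=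
  has (fun I => in_bitv I x) s.

Definition area_set (R : realType) (s : seq (bitv R)) : classical_sets.set R :=
  fun x => is_true (in_area s x).

Definition lowerL (R : realType) (s : seq (bitv R)) : R := reals.inf (area_set s).
Definition upperU (R : realType) (s : seq (bitv R)) : R := reals.sup (area_set s).

Definition certificate (R : realType) (T : finType) (indep : {set T} -> bool)
  (A : T -> seq (bitv R)) (w : T -> R) (B Q : {set T}) : Prop :=
  forall w' : T -> R,
    (forall e, in_area (A e) (w' e)) ->
    (forall e, e \in Q -> w' e = w e) ->
    min_weight_basis indep w' B.

(* Main.v *)
Require Import Defs.
From HB Require Import structures.
From mathcomp Require Import all_boot all_order all_algebra.
From mathcomp Require classical_sets.
From mathcomp Require Import reals.
From mathcomp Require Import ring lra.
From Stdlib Require Import Classical.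
Set Implicit Arguments. Unset Strict Implicit. Unset Printing Implicit Defensive.
Import Order.TTheory GRing.Theory Num.Theory.
Local Open Scope ring_scope.

Lemma indep_sub (T : finType) (indep : {set T} -> bool) :
  is_matroid indep -> forall X Y : {set T}, Y \subset X -> indep X -> indep Y.
Proof. by case=> _ h _. Qed.

Lemma augment (T : finType) (indep : {set T} -> bool) :
  is_matroid indep -> forall X Y : {set T}, indep X -> indep Y -> (#|X| < #|Y|)%N ->
  exists2 x, x \in Y :\: X & indep (x |: X).
Proof. by case=> _ _ h; exact: h. Qed.

Lemma ext_max (T : finType) (indep : {set T} -> bool) (hM : is_matroid indep)
  (S I : {set T}) : I \subset S -> indep I ->
  exists J : {set T}, [/\ I \subset J, J \subset S, indep J &
    forall x, x \in S -> x \notin J -> ~~ indep (x |: J)].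
Proof.
move=> IS iI.
have := @maxset_exists _ (fun Y => [&& indep Y, I \subset Y & Y \subset S]) I.
rewrite iI subxx IS => /(_ isT) [J /maxsetP [/and3P [iJ IJ JS] Jmax] _].
exists J; split => // x xS xJ; apply/negP => ix.
have := Jmax (x |: J).
rewrite ix (subset_trans IJ (subsetUr _ _)) subUset sub1set xS JS.
move=> /(_ isT (subsetUr _ _)) eq.
by move: xJ; rewrite -eq setU11.
Qed.

Lemma max_card (T : finType) (indep : {set T} -> bool) (hM : is_matroid indep)
  (S J K : {set T}) : J \subset S ->
  (forall x, x \in S -> x \notin J -> ~~ indep (x |: J)) -> indep J ->
  K \subset S -> indep K -> (#|K| <= #|J|)%N.
Proof.
move=> JS Jm iJ KS iK; rewrite leqNgt; apply/negP => lt.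
case: (augment hM iJ iK lt) => x /setDP [xK xJ] ix.
by move: (Jm x (subsetP KS x xK) xJ); rewrite ix.
Qed.

Lemma basis_indep (T : finType) (indep : {set T} -> bool) B :
  is_basis indep B -> indep B.
Proof. by case/maxsetP. Qed.

Lemma basis_max (T : finType) (indep : {set T} -> bool) B x :
  is_basis indep B -> x \notin B -> ~~ indep (x |: B).
Proof.
case/maxsetP => _ Bm xB; apply/negP => ix.
by move: xB; rewrite -(Bm _ ix (subsetUr _ _)) setU11.
Qed.

Lemma basis_card (T : finType) (indep : {set T} -> bool) (hM : is_matroid indep)
  B K : is_basis indep B -> indep K -> (#|K| <= #|B|)%N.
Proof.
move=> bB iK.
apply: (max_card hM (subsetT B) _ (basis_indep bB) (subsetT K) iK).
by move=> x _ xB; exact: basis_max.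
Qed.

Lemma basis_of_card (T : finType) (indep : {set T} -> bool) (hM : is_matroid indep)
  B J : is_basis indep B -> indep J -> (#|B| <= #|J|)%N -> is_basis indep J.
Proof.
move=> bB iJ c; apply/maxsetP; split => // Y iY JY.
apply/eqP; rewrite eq_sym eqEcard JY /=.
exact: leq_trans (basis_card hM bB iY) c.
Qed.

Lemma fund_circuitP (T : finType) (indep : {set T} -> bool) (hM : is_matroid indep)
  B e : is_basis indep B -> e \notin B ->
  [/\ ~~ indep (fund_circuit indep B e), fund_circuit indep B e \subset e |: B,
      e \in fund_circuit indep B e &
      forall D : {set T}, D \proper fund_circuit indep B e -> indep D].
Proof.
move=> bB eB.
have dep : ~~ indep (e |: B) := basis_max bB eB.
have := @minset_exists _ (fun X => ~~ indep X && (X \subset e |: B)) (e |: B).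
rewrite dep subxx => /(_ isT) [C0 /minsetP [/andP [dC0 C0s] C0min] _].
have cC0 : is_circuit indep C0 && (C0 \subset e |: B).
  rewrite C0s andbT; apply/minsetP; split => // D dD DC.
  by apply: C0min => //; rewrite dD (subset_trans DC C0s).
rewrite /fund_circuit; case: pickP => [C /andP [/minsetP [dC Cmin] CeB] | /(_ C0)];
  last by rewrite cC0.
rewrite /=.
have eC : e \in C.
  apply: contraT => eC; move: dC; rewrite (indep_sub hM _ (basis_indep bB)) //.
  apply/subsetP => x xC; have := subsetP CeB x xC; rewrite in_setU1.
  by case/orP => // /eqP xe; move: eC; rewrite -xe xC.
split => // D DC; apply: contraT => dD.
by have E := Cmin D dD (proper_sub DC); move: DC; rewrite E properxx.
Qed.

Lemma weight_swap (R : numDomainType) (T : finType) (w : T -> R) (X : {set T}) (a b : T) :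
  a \notin X -> b \in X -> weight w (a |: (X :\ b)) + w b = weight w X + w a.
Proof.
move=> aX bX; rewrite /weight big_setU1 /=; last by rewrite in_setD1 (negbTE aX) andbF.
rewrite (big_setD1 b bX) /=; ring.
Qed.

Lemma fwd_exchange (T : finType) (indep : {set T} -> bool) (hM : is_matroid indep)
  B e f : is_basis indep B -> e \notin B -> f \in fund_circuit indep B e :\ e ->
  f \in B /\ is_basis indep (e |: (B :\ f)).
Proof.
move=> bB eB fC'.
case: (fund_circuitP hM bB eB) => dC CeB eC Cprop.
set C := fund_circuit indep B e in dC CeB eC Cprop fC'.
move/setD1P: fC' => [fe fC].
have fB : f \in B by have := subsetP CeB f fC; rewrite in_setU1 (negbTE fe).
split => //.
have iI : indep (C :\ f) := Cprop _ (properD1 fC).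
have IS : C :\ f \subset e |: B := subset_trans (subsetDl _ _) CeB.
case: (ext_max hM IS iI) => J [IJ JS iJ Jm].
have cardBJ : (#|B| <= #|J|)%N :=
  max_card hM JS Jm iJ (subsetUr _ _) (basis_indep bB).
have fJ : f \notin J.
  apply: contraT => /negPn fJ; move: dC; rewrite (indep_sub hM _ iJ) //.
  apply/subsetP => x xC; case: (eqVneq x f) => [-> //| xf].
  by apply: (subsetP IJ); rewrite in_setD1 xf.
have JX : J \subset e |: (B :\ f).
  apply/subsetP => x xJ; have := subsetP JS x xJ; rewrite !in_setU1 in_setD1.
  case/orP => [-> //| xB]; rewrite xB andbT orbC; apply/orP; left.
  by apply: contraNneq fJ => <-.
have cX : #|e |: (B :\ f)| = #|B|.
  by rewrite cardsU1 in_setD1 (negbTE eB) andbF /= add1n [#|B|](cardsD1 f) fB.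
have JE : J = e |: (B :\ f) by apply/eqP; rewrite eqEcard JX cX cardBJ.
by rewrite -JE; apply: (basis_of_card hM bB iJ cardBJ).
Qed.

Lemma mwb_fwd (R : realFieldType) (T : finType) (indep : {set T} -> bool)
  (hM : is_matroid indep) (w : T -> R) B e f :
  min_weight_basis indep w B -> e \notin B -> f \in fund_circuit indep B e :\ e ->
  w f <= w e.
Proof.
move=> [bB Hm] eB fC.
case: (fwd_exchange hM bB eB fC) => fB bX.
have h1 := Hm _ bX.
have h2 := weight_swap w eB fB.
lra.
Qed.

Lemma bwd_exchange (T : finType) (indep : {set T} -> bool) (hM : is_matroid indep)
  B B' e : is_basis indep B -> is_basis indep B' -> e \in B' -> e \notin B ->
  exists f, [/\ f \in fund_circuit indep B e :\ e, f \notin B' &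
                indep (f |: (B' :\ e))].
Proof.
move=> bB bB' eB' eB.
case: (fund_circuitP hM bB eB) => dC CeB eC Cprop.
set C := fund_circuit indep B e in dC CeB eC Cprop *.
set X := B' :\ e; set I := C :\ e.
have iI : indep I := Cprop _ (properD1 eC).
case: (boolP [exists f in I, (f \notin B') && indep (f |: X)]).
  by case/exists_inP => f fI /andP [fB' i]; exists f.
move/exists_inP => H; exfalso.
set S := X :|: I.
case: (ext_max hM (subsetUr X I) iI) => J [IJ JS iJ Jm].
have iX : indep X := indep_sub hM (subsetDl _ _) (basis_indep bB').
have Xm : forall y, y \in S -> y \notin X -> ~~ indep (y |: X).
  move=> y; rewrite in_setU => /orP [-> //| yI] yX.
  apply/negP => iy; apply: H; exists y => //; rewrite iy andbT.
  move: yI; rewrite in_setD1 => /andP [ye _].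
  by move: yX; rewrite in_setD1 ye.
have cJX : (#|J| <= #|X|)%N := max_card hM (subsetUl _ _) Xm iX JS iJ.
have cXB : (#|X| < #|B'|)%N by rewrite [#|B'|](cardsD1 e) eB'.
case: (augment hM iJ (basis_indep bB') (leq_ltn_trans cJX cXB)) =>
  g /setDP [gB' gJ] ig.
case: (eqVneq g e) => [ge | gne].
  move: dC; rewrite (indep_sub hM _ ig) //; rewrite ge.
  apply/subsetP => x xC; rewrite in_setU1; case: (eqVneq x e) => //= xe.
  by apply: (subsetP IJ); rewrite in_setD1 xe.
have gS : g \in S by rewrite in_setU in_setD1 gne gB'.
by move: (Jm g gS gJ); rewrite ig.
Qed.

Lemma mwb_of_local (R : realFieldType) (T : finType) (indep : {set T} -> bool)
  (hM : is_matroid indep) (w : T -> R) B : is_basis indep B ->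
  (forall e f, e \notin B -> f \in fund_circuit indep B e :\ e -> w f <= w e) ->
  min_weight_basis indep w B.
Proof.
move=> bB H; split => // B'.
suff: forall n B', (#|B' :\: B| <= n)%N -> is_basis indep B' -> weight w B <= weight w B'.
  by move/(_ _ B' (leqnn _)).
elim => [|n IH] {}B' Hn bB';
  case: (set_0Vmem (B' :\: B)) => [E0 | [e eD]].
- have sub : B' \subset B by rewrite -setD_eq0 E0.
  have : B' == B by rewrite eqEcard sub (basis_card hM bB' (basis_indep bB)).
  by move/eqP ->.
- by move: Hn; rewrite leqn0 cards_eq0 => /eqP E; move: eD; rewrite E inE.
- have sub : B' \subset B by rewrite -setD_eq0 E0.
  have : B' == B by rewrite eqEcard sub (basis_card hM bB' (basis_indep bB)).
  by move/eqP ->.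
move/setDP: (eD) => [eB' eB].
case: (bwd_exchange hM bB bB' eB' eB) => f [fC fB' iB''].
have fB : f \in B.
  move: fC; rewrite in_setD1 => /andP [fe fC].
  case: (fund_circuitP hM bB eB) => _ CeB _ _.
  by have := subsetP CeB f fC; rewrite in_setU1 (negbTE fe).
have cB'' : #|f |: (B' :\ e)| = #|B'|.
  by rewrite cardsU1 in_setD1 (negbTE fB') andbF /= add1n [#|B'|](cardsD1 e) eB'.
have bB'' : is_basis indep (f |: (B' :\ e)).
  by apply: (basis_of_card hM bB iB''); rewrite cB'' (basis_card hM bB' (basis_indep bB)).
have le1 : weight w B <= weight w (f |: (B' :\ e)).
  apply: IH bB''.
  have s : (f |: (B' :\ e)) :\: B \subset (B' :\: B) :\ e.
    apply/subsetP => x; rewrite !inE => /andP [xB /orP [/eqP xf | /andP [xe xB']]].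
      by move: xB; rewrite xf fB.
    by rewrite xe xB xB'.
  have c : (#|(B' :\: B) :\ e| < #|B' :\: B|)%N by rewrite [#|B' :\: B|](cardsD1 e) eD.
  by rewrite -ltnS; apply: leq_ltn_trans (subset_leq_card s) (leq_trans c Hn).
have h2 := weight_swap w fB' eB'.
have h3 := H e f eB fC.
lra.
Qed.

Lemma bitv_ub (R : realDomainType) (I : bitv R) x : in_bitv I x -> x <= ihi I.
Proof. by rewrite /in_bitv; case: iclosed => /andP [_ h] //; exact: ltW. Qed.

Lemma bitv_lb (R : realDomainType) (I : bitv R) x : in_bitv I x -> ilo I <= x.
Proof. by rewrite /in_bitv; case: iclosed => /andP [h _] //; exact: ltW. Qed.

Lemma area_ub (R : realDomainType) (s : seq (bitv R)) :
  exists M, forall x, in_area s x -> x <= M.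
Proof.
elim: s => [|I s [M HM]]; first by exists 0.
exists (Num.max (ihi I) M) => x /= /orP [h | h].
  by rewrite le_max (bitv_ub h).
by rewrite le_max (HM x h) orbT.
Qed.

Lemma area_lb (R : realDomainType) (s : seq (bitv R)) :
  exists M, forall x, in_area s x -> M <= x.
Proof.
elim: s => [|I s [M HM]]; first by exists 0.
exists (Num.min (ilo I) M) => x /= /orP [h | h].
  by rewrite ge_min (bitv_lb h).
by rewrite ge_min (HM x h) orbT.
Qed.

Lemma le_U (R : realType) (s : seq (bitv R)) x : in_area s x -> x <= upperU s.
Proof.
move=> h; rewrite /upperU; apply: ub_le_sup => //.
by case: (area_ub s) => M HM; exists M => y Hy; exact: HM.
Qed.

Lemma ge_L (R : realType) (s : seq (bitv R)) x : in_area s x -> lowerL s <= x.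
Proof.
move=> h; rewrite /lowerL; apply: ge_inf => //.
by case: (area_lb s) => M HM; exists M => y Hy; exact: HM.
Qed.

Lemma U_le (R : realType) (s : seq (bitv R)) c : (exists x, in_area s x) ->
  (forall x, in_area s x -> x <= c) -> upperU s <= c.
Proof. by move=> [x hx] h; apply: ge_sup; [exists x | move=> y hy; exact: h]. Qed.

Lemma le_L (R : realType) (s : seq (bitv R)) c : (exists x, in_area s x) ->
  (forall x, in_area s x -> c <= x) -> c <= lowerL s.
Proof. by move=> [x hx] h; apply: lb_le_inf; [exists x | move=> y hy; exact: h]. Qed.

Theorem lemma25 (R : realType) (T : finType) (indep : {set T} -> bool)
  (A : T -> seq (bitv R)) (w : T -> R) (B Q : {set T}) :
  is_matroid indep ->
  (forall e, exists x, in_area (A e) x) ->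
  (forall e, in_area (A e) (w e)) ->
  min_weight_basis indep w B ->
  let L := fun e => lowerL (A e) in
  let U := fun e => upperU (A e) in
  let C' := fun e => fund_circuit indep B e :\ e in
  let F := fun e => [set f in C' e | L e < U f] in
  let Fh := fun e => [set f in C' e | w e < U f] in
  certificate indep A w B Q <->
  (forall e, e \notin B ->
     [/\ ((forall f, f \in C' e -> U f <= w e) ->
          (exists2 f', f' \in C' e & L e < w f') -> e \in Q),
         ((forall f, f \in C' e -> U f <= w e) ->
          (forall f, f \in C' e -> w f <= L e) ->
          e \in Q \/ F e \subset Q),
         ((exists2 f, f \in C' e & w e < U f) ->
          (exists2 f', f' \in C' e & L e < w f') ->
          e |: Fh e \subset Q) &
         ((exists2 f, f \in C' e & w e < U f) ->
          (forall f', f' \in C' e -> w f' <= L e) ->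
          F e \subset Q \/ e |: Fh e \subset Q)]).
Proof.
move=> hM Hne Hw Hmwb L U C' F Fh.
have bB := Hmwb.1.
have wU : forall f, w f <= U f by move=> f; exact: le_U.
have Lw : forall e, L e <= w e by move=> e; exact: ge_L.
have wfe : forall e f, e \notin B -> f \in C' e -> w f <= w e.
  by move=> e f eB fC; apply: (mwb_fwd hM Hmwb eB); exact: fC.
pose Pair e f := [/\ f \notin Q -> U f <= w e, e \notin Q -> w f <= L e &
                     e \notin Q -> f \notin Q -> U f <= L e].
have step1 : certificate indep A w B Q <->
             (forall e f, e \notin B -> f \in C' e -> Pair e f).
  split.
  - move=> Hc e f eB fC.
    have key : forall a b, in_area (A f) a -> in_area (A e) b ->
        (f \in Q -> a = w f) -> (e \in Q -> b = w e) -> a <= b.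
      move=> a b Ha Hb HaQ HbQ.
      have fe : f != e by move: fC; rewrite /C' in_setD1 => /andP [].
      pose w' := fun x => if x == f then a else if x == e then b else w x.
      have := Hc w'.
      have H1 : forall x, in_area (A x) (w' x).
        by move=> x; rewrite /w'; case: eqP => [-> //|_]; case: eqP => [-> //|_].
      have H2 : forall x, x \in Q -> w' x = w x.
        move=> x xQ; rewrite /w'; case: eqP => [xf|_]; first by rewrite xf HaQ // -xf.
        by case: eqP => [xe|_]; first by rewrite xe HbQ // -xe.
      move=> /(_ H1 H2) mw.
      have : w' f <= w' e by apply: (mwb_fwd hM mw eB); exact: fC.
      have ef : (e == f) = false by rewrite eq_sym (negbTE fe).
      by rewrite /w' ef !eqxx.
    split.
    + move=> fQ; apply: U_le => // a Ha; apply: key => //.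
      by move=> h; move: fQ; rewrite h.
    + move=> eQ; apply: le_L => // b Hb; apply: key => //.
      by move=> h; move: eQ; rewrite h.
    + move=> eQ fQ; apply: le_L => // b Hb; apply: U_le => // a Ha; apply: key => //.
      * by move=> h; move: fQ; rewrite h.
      * by move=> h; move: eQ; rewrite h.
  - move=> Hp w' Hin HQ; apply: mwb_of_local => // e f eB fC.
    case: (Hp e f eB fC) => P1 P2 P3.
    have wf : w' f <= U f by exact: le_U.
    have we : L e <= w' e by exact: ge_L.
    case: (boolP (e \in Q)) => eQ; case: (boolP (f \in Q)) => fQ.
    + by rewrite !HQ //; exact: wfe.
    + by rewrite (HQ e eQ); exact: le_trans wf (P1 fQ).
    + by rewrite (HQ f fQ); exact: le_trans (P2 eQ) we.
    + exact: le_trans wf (le_trans (P3 eQ fQ) we).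
have step2 : forall e, e \notin B -> ((forall f, f \in C' e -> Pair e f) <->
     [/\ ((forall f, f \in C' e -> U f <= w e) ->
          (exists2 f', f' \in C' e & L e < w f') -> e \in Q),
         ((forall f, f \in C' e -> U f <= w e) ->
          (forall f, f \in C' e -> w f <= L e) ->
          e \in Q \/ F e \subset Q),
         ((exists2 f, f \in C' e & w e < U f) ->
          (exists2 f', f' \in C' e & L e < w f') ->
          e |: Fh e \subset Q) &
         ((exists2 f, f \in C' e & w e < U f) ->
          (forall f', f' \in C' e -> w f' <= L e) ->
          F e \subset Q \/ e |: Fh e \subset Q)]).
  move=> e eB.
  have eQex : (forall f, f \in C' e -> Pair e f) ->
              (exists2 f', f' \in C' e & L e < w f') -> e \in Q.
    move=> HP [f' f'C lt]; apply: contraT => eQ.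
    by case: (HP f' f'C) => _ P2 _; have := P2 eQ; rewrite leNgt lt.
  split.
  - move=> HP; split.
    + by move=> _; exact: eQex.
    + move=> _ _; case: (boolP (e \in Q)) => eQ; [left => // | right].
      apply/subsetP => f; rewrite /F inE => /andP [fC lt]; apply: contraT => fQ.
      by case: (HP f fC) => _ _ P3; have := P3 eQ fQ; rewrite leNgt lt.
    + move=> _ ex; have eQ := eQex HP ex.
      apply/subsetP => x; rewrite in_setU1 => /orP [/eqP -> //|].
      rewrite /Fh inE => /andP [xC lt]; apply: contraT => xQ.
      by case: (HP x xC) => P1 _ _; have := P1 xQ; rewrite leNgt lt.
    + move=> _ _; case: (boolP (e \in Q)) => eQ; [right | left].
      * apply/subsetP => x; rewrite in_setU1 => /orP [/eqP -> //|].
        rewrite /Fh inE => /andP [xC lt]; apply: contraT => xQ.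
        by case: (HP x xC) => P1 _ _; have := P1 xQ; rewrite leNgt lt.
      * apply/subsetP => f; rewrite /F inE => /andP [fC lt]; apply: contraT => fQ.
        by case: (HP f fC) => _ _ P3; have := P3 eQ fQ; rewrite leNgt lt.
  - move=> [H1 H2 H3 H4] f fC.
    have notF : F e \subset Q -> f \notin Q -> U f <= L e.
      move=> FQ fQ; rewrite leNgt; apply/negP => lt; move/negP: fQ; apply.
      by apply: (subsetP FQ); rewrite /F inE fC lt.
    have notFh : e |: Fh e \subset Q -> f \notin Q -> U f <= w e.
      move=> FQ fQ; rewrite leNgt; apply/negP => lt; move/negP: fQ; apply.
      by apply: (subsetP FQ); rewrite /Fh in_setU1 inE fC lt orbT.
    have eQsub : e |: Fh e \subset Q -> e \in Q.
      by move=> s; apply: (subsetP s); rewrite setU11.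
    case: (classic (exists2 f, f \in C' e & w e < U f)) => [ex1 | nex1];
    case: (classic (exists2 f', f' \in C' e & L e < w f')) => [ex2 | nex2].
    + have s := H3 ex1 ex2; have eQ := eQsub s.
      have nQ : forall P : Prop, e \notin Q -> P by move=> P; rewrite eQ.
      rewrite /Pair; split; [exact: notFh s | exact: nQ | exact: nQ].
    + have hall2 : forall f', f' \in C' e -> w f' <= L e.
        by move=> g gC; rewrite leNgt; apply/negP => lt; apply: nex2; exists g.
      case: (H4 ex1 hall2) => [FQ | s].
      * rewrite /Pair; split.
        - by move=> fQ; exact: le_trans (notF FQ fQ) (Lw e).
        - by move=> _; exact: hall2.
        - by move=> _ fQ; exact: notF.
      * have eQ := eQsub s.
        have nQ : forall P : Prop, e \notin Q -> P by move=> P; rewrite eQ.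
        rewrite /Pair; split; [exact: notFh s | exact: nQ | exact: nQ].
    + have hall : forall f, f \in C' e -> U f <= w e.
        by move=> g gC; rewrite leNgt; apply/negP => lt; apply: nex1; exists g.
      have eQ := H1 hall ex2.
      have nQ : forall P : Prop, e \notin Q -> P by move=> P; rewrite eQ.
      rewrite /Pair; split; [by move=> _; exact: hall | exact: nQ | exact: nQ].
    + have hall : forall f, f \in C' e -> U f <= w e.
        by move=> g gC; rewrite leNgt; apply/negP => lt; apply: nex1; exists g.
      have hall2 : forall f', f' \in C' e -> w f' <= L e.
        by move=> g gC; rewrite leNgt; apply/negP => lt; apply: nex2; exists g.
      case: (H2 hall hall2) => [eQ | FQ].
      * have nQ : forall P : Prop, e \notin Q -> P by move=> P; rewrite eQ.
        rewrite /Pair; split; [by move=> _; exact: hall | exact: nQ | exact: nQ].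
      * rewrite /Pair; split; [by move=> _; exact: hall | by move=> _; exact: hall2 | by move=> _; exact: notF FQ].
split.
- move/step1 => H e eB; apply/(step2 e eB) => f fC; exact: H.
- move=> H; apply/step1 => e f eB fC; exact: (proj2 (step2 e eB) (H e eB)).
Qed.
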